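(* Let $w$ be a non-degenerate 3-web on an open subset of $\mathbb{R}^3$ formed by two foliations by surfaces and one foliation by curves. Then the rank of $w$ is at most $1$.
   Context: For a web $w$ formed by foliations $\mathcal{F}_1,\dots,\mathcal{F}_d$ (leaves may have different dimensions), an abelian relation is a $d$-tuple of 1-forms $(\sigma_1,\dots,\sigma_d)$ such that each $\sigma_i$ vanishes on the leaves of $\mathcal{F}_i$, each $\sigma_i$ is closed, and $\sigma_1+\dots+\sigma_d=0$; the rank of $w$ is the dimension of the real vector space of abelian relations. Non-degenerate means: the two surface foliations are transversal (their tangent planes are distinct at each point), and the tangent line of the curve foliation is, at each point, not contained in the tangent plane of either surface foliation. The statement is local. *)

(* Defs.v *)
From HB Require Import structures.
From mathcomp Require Import all_boot all_order all_algebra.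
From mathcomp Require Import all_classical all_reals all_analysis.
Set Implicit Arguments. Unset Strict Implicit. Unset Printing Implicit Defensive.
Import Order.TTheory GRing.Theory Num.Theory.
Import numFieldNormedType.Exports.
Local Open Scope classical_set_scope.
Local Open Scope ring_scope.

Notation pt R := ('rV[R]_3).

Fixpoint Ck_on (R : realType) (m k : nat) (U : set (pt R))
    (f : pt R -> 'rV[R]_m) : Prop :=
  match k with
  | 0 => forall x, U x -> {for x, continuous f}
  | k'.+1 => (forall x, U x -> differentiable f x) /\
             forall v : pt R, Ck_on k' U (fun x => derive f x v)
  end.

Definition smooth_on (R : realType) (m : nat) (U : set (pt R))
    (f : pt R -> 'rV[R]_m) : Prop := forall k, Ck_on k U f.

(* A (smooth, regular) foliation of codimension m on the open set U, described
   by its tangent distribution D (D x = tangent space at x of the leaf through x):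
   locally it is given by the fibres of a smooth submersion g : V -> R^m,
   i.e. D x = ker (dg_x) with dg_x surjective.
   Codimension 1 = foliation by surfaces, codimension 2 = foliation by curves. *)
Definition foliation (R : realType) (m : nat) (U : set (pt R))
    (D : pt R -> set (pt R)) : Prop :=
  forall p, U p -> exists (V : set (pt R)) (g : pt R -> 'rV[R]_m),
    [/\ open V, V p, V `<=` U, smooth_on V g &
      forall x, V x ->
        (forall w : 'rV[R]_m, exists v : pt R, derive g x v = w) /\
        D x = [set v | derive g x v = 0]].

(* 1-forms on R^3: a covector field given by its coefficient row vector. *)
Definition form (R : realType) := pt R -> pt R.

Definition eval_form (R : realType) (a v : pt R) : R :=
  \sum_(i < 3) a 0 i * v 0 i.

Definition dcoef (R : realType) (s : form R) (i : 'I_3) (x : pt R) : 'rV[R]_3 :=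
  derive (fun y => s y) x (delta_mx 0 i).

Definition closed_form_on (R : realType) (W : set (pt R)) (s : form R) : Prop :=
  smooth_on W s /\
  forall x, W x -> forall i j : 'I_3, dcoef s i x 0 j = dcoef s j x 0 i.

Definition vanishes_on_leaves (R : realType) (W : set (pt R))
    (D : pt R -> set (pt R)) (s : form R) : Prop :=
  forall x, W x -> forall v, D x v -> eval_form (s x) v = 0.

Definition abelian_relation (R : realType) (D1 D2 D3 : pt R -> set (pt R))
    (W : set (pt R)) (s1 s2 s3 : form R) : Prop :=
  [/\ closed_form_on W s1, closed_form_on W s2, closed_form_on W s3,
      [/\ vanishes_on_leaves W D1 s1, vanishes_on_leaves W D2 s2
        & vanishes_on_leaves W D3 s3] &
      forall x, W x -> s1 x + s2 x + s3 x = 0].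

Definition web_nondegenerate (R : realType) (U : set (pt R))
    (D1 D2 D3 : pt R -> set (pt R)) : Prop :=
  forall x, U x -> [/\ D1 x <> D2 x, ~ (D3 x `<=` D1 x) & ~ (D3 x `<=` D2 x)].

(* The rank (at the point p, i.e. the dimension of the space of germs at p of
   abelian relations) is at most 1: any two germs are linearly dependent. *)
Definition rank_le1_at (R : realType) (D1 D2 D3 : pt R -> set (pt R)) (p : pt R) : Prop :=
  forall (W W' : set (pt R)) (s1 s2 s3 t1 t2 t3 : form R),
    open W -> W p -> abelian_relation D1 D2 D3 W s1 s2 s3 ->
    open W' -> W' p -> abelian_relation D1 D2 D3 W' t1 t2 t3 ->
    exists (a b : R) (W'' : set (pt R)),
      [/\ (a, b) <> (0, 0), open W'', W'' p, W'' `<=` W `&` W' &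
        forall x, W'' x ->
          [/\ a *: s1 x + b *: t1 x = 0, a *: s2 x + b *: t2 x = 0
            & a *: s3 x + b *: t3 x = 0]].

(* Main.v *)
From HB Require Import structures.
From mathcomp Require Import all_boot all_order all_algebra.
From mathcomp Require Import all_classical all_reals all_analysis.
Require Import Defs.
From mathcomp Require Import ring lra.
Set Implicit Arguments. Unset Strict Implicit. Unset Printing Implicit Defensive.
Import Order.TTheory GRing.Theory Num.Theory.
Import numFieldNormedType.Exports.
Local Open Scope classical_set_scope.
Local Open Scope ring_scope.

Section S.
Context {R : realType}.
Notation pt := ('rV[R]_3).

Definition ee (i : 'I_3) : pt := delta_mx 0 i.
Definition pd (h : pt -> R) (i : 'I_3) (x : pt) : R := derive h x (ee i).
Definition ent m (f : pt -> 'rV[R]_m) (j : 'I_m) : pt -> R := fun x => f x 0 j.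

Lemma ent_diff m (f : pt -> 'rV[R]_m) j x :
  differentiable f x -> differentiable (ent f j) x.
Proof.
move=> df; rewrite /ent.
have -> : (fun x => f x 0 j) = (fun N : 'rV[R]_m => N 0 j) \o f by [].
apply: differentiable_comp => //; exact: differentiable_coord.
Qed.

Lemma ent_derive m (f : pt -> 'rV[R]_m) j x v :
  differentiable f x -> derive (ent f j) x v = derive f x v 0 j.
Proof.
move=> df; rewrite deriveE; last exact: ent_diff.
rewrite deriveE //.
have -> : ent f j = (fun N : 'rV[R]_m => N 0 j) \o f by [].
rewrite diff_comp //; last exact: differentiable_coord.
have @c : {linear 'rV[R]_m -> R}.
  by exists (fun N : 'rV[R]_m => N 0 j); do 2![eexists]; do ?[constructor];
     rewrite ?mxE// => ? *; rewrite ?mxE//; move=> ?; rewrite !mxE.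
rewrite (_ : (fun N : 'rV[R]_m => N 0 j) = c) // diff_lin //.
exact: coord_continuous.
Qed.

Lemma sum3 (F : 'I_3 -> R) : \sum_(k < 3) F k = F 0 + F 1 + F 2.
Proof.
rewrite !big_ord_recr big_ord0 /= add0r.
congr (F _ + F _ + F _); exact: val_inj.
Qed.

Lemma derive_lin m (f : pt -> 'rV[R]_m) x v :
  differentiable f x -> derive f x v = \sum_(k < 3) v 0 k *: derive f x (ee k).
Proof.
move=> df; rewrite {1}(row_sum_delta v) deriveE // linear_sum.
apply: eq_bigr => k _; rewrite linearZ /= deriveE //.
Qed.

Lemma derive_lin1 (h : pt -> R) x v :
  differentiable h x -> derive h x v = \sum_(k < 3) v 0 k * pd h k x.
Proof.
move=> df; rewrite {1}(row_sum_delta v) deriveE // linear_sum.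
apply: eq_bigr => k _; rewrite linearZ /= /pd deriveE //.
Qed.

Lemma smooth_diff m (V : set pt) (f : pt -> 'rV[R]_m) x :
  smooth_on V f -> V x -> differentiable f x.
Proof. by move=> /(_ 1%N) [+ _] Vx => /(_ x Vx). Qed.

Lemma smooth_der m (V : set pt) (f : pt -> 'rV[R]_m) v :
  smooth_on V f -> smooth_on V (fun x => derive f x v).
Proof. by move=> sf k; case: (sf k.+1) => _ /(_ v). Qed.


Definition dot3 (a b : 'I_3 -> R) := a 0 * b 0 + a 1 * b 1 + a 2 * b 2.
Definition crs (a b : 'I_3 -> R) : 'I_3 -> R := fun k =>
  match val k with
  | 0%N => a 1 * b 2 - a 2 * b 1
  | 1%N => a 2 * b 0 - a 0 * b 2
  | _ => a 0 * b 1 - a 1 * b 0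
  end.

Lemma ord3 (j : 'I_3) : j = 0 \/ j = 1 \/ j = 2.
Proof.
case: j => [[|[|[|k]]] Hj].
- by left; apply: val_inj.
- by right; left; apply: val_inj.
- by right; right; apply: val_inj.
- by [].
Qed.

Lemma sos3 (x y z : R) : x * x + y * y + z * z = 0 -> [/\ x = 0, y = 0 & z = 0].
Proof. by move=> H; split; nra. Qed.

Lemma par_lemma (a s : 'I_3 -> R) :
  (forall v, dot3 a v = 0 -> dot3 s v = 0) ->
  forall j, dot3 a a * s j = dot3 s a * a j.
Proof.
move=> H.
pose v k := dot3 a a * s k - dot3 s a * a k.
have av : dot3 a v = 0 by rewrite /v /dot3; ring.
have sv := H _ av.
have : v 0 * v 0 + v 1 * v 1 + v 2 * v 2 = 0.
  rewrite -[LHS]/(dot3 v v).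
  have -> : dot3 v v = dot3 a a * dot3 s v - dot3 s a * dot3 a v
    by rewrite /v /dot3; ring.
  by rewrite sv av !mulr0 subr0.
move=> /sos3 [h0 h1 h2] j; apply/eqP; rewrite -subr_eq0; apply/eqP.
by case: (ord3 j) => [->|[->|->]].
Qed.

Lemma cross_orth1 (a b : 'I_3 -> R) : dot3 a (crs a b) = 0.
Proof. by rewrite /dot3 /crs /=; ring. Qed.
Lemma cross_orth2 (a b : 'I_3 -> R) : dot3 b (crs a b) = 0.
Proof. by rewrite /dot3 /crs /=; ring. Qed.

Lemma line_lemma (r1 r2 u v : 'I_3 -> R) :
  dot3 r1 v = 0 -> dot3 r2 v = 0 ->
  dot3 (crs r1 r2) (crs r1 r2) * dot3 u v =
  dot3 v (crs r1 r2) * dot3 u (crs r1 r2).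
Proof.
move=> h1 h2; apply/eqP; rewrite -subr_eq0; apply/eqP.
pose P := crs r1 r2.
have -> : dot3 (crs r1 r2) (crs r1 r2) * dot3 u v -
  dot3 v (crs r1 r2) * dot3 u (crs r1 r2) =
  dot3 r2 v * dot3 u (crs P r1) - dot3 r1 v * dot3 u (crs P r2).
  by rewrite /P /dot3 /crs /=; ring.
by rewrite h1 h2 !mul0r subr0.
Qed.

Lemma plane_lemma (a b : 'I_3 -> R) v0 :
  dot3 a v0 = 1 -> dot3 (crs a b) (crs a b) = 0 ->
  forall v, dot3 a v = 0 -> dot3 b v = 0.
Proof.
move=> a1 Q0 v av.
have [q0 q1 q2] := sos3 Q0.
have aa : dot3 a a != 0.
  apply/negP => /eqP /sos3 [x0 x1 x2].
  by move: a1; rewrite /dot3 x0 x1 x2 !mul0r !add0r => /eqP; rewrite eq_sym oner_eq0.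
have : dot3 b v * dot3 a a - dot3 a v * dot3 a b =
  (crs (crs a b) a 0) * v 0 + (crs (crs a b) a 1) * v 1 + (crs (crs a b) a 2) * v 2.
  by rewrite /dot3 /crs /=; ring.
rewrite /crs /= in q0 q1 q2 *.
rewrite q0 q1 q2 av !mul0r !subrr !mul0r !addr0 subr0 => /eqP.
by rewrite mulf_eq0 (negbTE aa) orbF => /eqP.
Qed.

Lemma solve_lemma (u w v : 'I_3 -> R) k :
  dot3 (crs u w) (crs u w) * v k =
  dot3 (crs v w) (crs u w) * u k - dot3 (crs v u) (crs u w) * w k
  + dot3 (crs v u) w * crs u w k.
Proof.
by case: (ord3 k) => [->|[->|->]]; rewrite /dot3 /crs /=; ring.
Qed.

Lemma gronwall (phi : R -> R) L :
  (forall t, 0 <= t <= 1 -> derivable phi t 1) ->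
  (forall t, 0 < t < 1 -> `|'D_1 phi t| <= L * `|phi t|) ->
  phi 0 = 0 -> phi 1 = 0.
Proof.
move=> dphi bnd phi0.
pose g : R -> R := phi * phi * (expR \o ( *%R (- (2*L)))).
have gd (t : R) : 0 <= t <= 1 -> is_derive t 1 g
  ((phi t * phi t) * (expR (- (2 * L) * t) * (- (2 * L))) +
   expR (- (2 * L) * t) * (phi t * 'D_1 phi t + phi t * 'D_1 phi t)).
  move=> /dphi /derivableP dp; apply: is_derive_eq.
  by rewrite /= /GRing.scale /= mulr1.
have key : g 1 <= g 0.
  apply: (@ler0_derive1_nincr _ g 0 1) => //.
  - move=> x; rewrite in_itv /= => /andP[x0 x1].
    have gx : 0 <= x <= 1 by rewrite !ltW.
    by have [] := gd x gx.
  - move=> x; rewrite in_itv /= => /andP[x0 x1].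
    have gx : 0 <= x <= 1 by rewrite !ltW.
    have [_ dv] := gd x gx; rewrite derive1E dv.
    have ex := expR_gt0 (- (2 * L) * x).
    have b := bnd x; rewrite x0 x1 /= in b; have b' := b isT.
    have h1 : phi x * 'D_1 phi x <= `|phi x| * `|'D_1 phi x|.
      by rewrite -normrM ler_norm.
    have h2 : `|phi x| * `|'D_1 phi x| <= `|phi x| * (L * `|phi x|).
      by rewrite ler_wpM2l.
    have h3 : `|phi x| * `|phi x| = phi x * phi x.
      by rewrite -normrM ger0_norm // -expr2 sqr_ge0.
    have hd : phi x * 'D_1 phi x - L * (phi x * phi x) <= 0.
      rewrite subr_le0 -h3 (le_trans h1) // (le_trans h2) //.
      by rewrite mulrCA.
    set e := expR _ in ex *.
    have -> : phi x * phi x * (e * - (2 * L)) +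
      e * (phi x * 'D_1 phi x + phi x * 'D_1 phi x) =
      (2 * e) * (phi x * 'D_1 phi x - L * (phi x * phi x)) by ring.
    by rewrite mulr_ge0_le0 // mulr_ge0 // ltW.
  - apply: continuous_in_subspaceT => x; rewrite inE /= in_itv /= => /andP[x0 x1].
    have gx : 0 <= x <= 1 by rewrite x0 x1.
    by have [/derivable1_diffP/differentiable_continuous] := gd x gx.
have key' : phi 1 * phi 1 * expR (- (2 * L) * 1) <=
  phi 0 * phi 0 * expR (- (2 * L) * 0) by exact: key.
rewrite phi0 !mul0r in key'.
have ex := expR_gt0 (- (2 * L) * 1).
have : phi 1 * phi 1 <= 0.
  by rewrite -(@ler_pM2r _ (expR (- (2 * L) * 1))) // mul0r.
by nra.
Qed.

Lemma seg_derive (F : pt -> R) (p d : pt) (t : R) :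
  differentiable F (p + t *: d) ->
  derivable (fun s : R => F (p + s *: d)) t 1 /\
  'D_1 (fun s : R => F (p + s *: d)) t = derive F (p + t *: d) d.
Proof.
move=> dF.
have gd : is_diff t (cst p + ( *:%R ^~ d)) (0 + ( *:%R ^~ d)) by exact: is_diffD.
have ge : (fun s : R => p + s *: d) = cst p + ( *:%R ^~ d) by apply: funext.
have dg : differentiable (fun s : R => p + s *: d) t by rewrite ge; exact: ex_diff.
have dg1 : 'd (fun s : R => p + s *: d) t 1 = d.
  by rewrite ge diff_val /= add0r scale1r.
have dc : differentiable (F \o (fun s : R => p + s *: d)) t.
  by apply: differentiable_comp.
split; first exact/derivable1_diffP.
rewrite deriveE; last exact: dc.
rewrite diff_comp //= dg1 deriveE //.
Qed.


Lemma alg1 (r Sij Sji sj si Ri Rj F Uji Uij uj ui fi fj : R) :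
 r*Sij + sj*Ri = F*Uji + uj*fi -> r*Sji + si*Rj = F*Uij + ui*fj -> Sij = Sji ->
 fi*uj - fj*ui = Ri*sj - Rj*si - F*(Uji - Uij).
Proof.
move=> H1 H2 HS; subst Sji.
have e1 : uj*fi = r*Sij + sj*Ri - F*Uji by rewrite H1; ring.
have e2 : ui*fj = r*Sij + si*Rj - F*Uij by rewrite H2; ring.
by rewrite (mulrC fi) (mulrC fj) e1 e2; ring.
Qed.

Section Near.
Variable p : pt.

Definition Bnd (h : pt -> R) := exists M, \forall x \near p, `|h x| <= M.
Definition Good (h : pt -> R) :=
  (\forall x \near p, differentiable h x) /\ (forall i, Bnd (pd h i)).
Definition OF (F X : pt -> R) := exists K, \forall x \near p, `|X x| <= K * `|F x|.

Lemma cont_Bnd h : {for p, continuous h} -> Bnd h.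
Proof.
move=> hc; exists (`|h p| + 1).
have := @cvgr_dist_lt _ _ _ _ (nbhs_filter p) _ _ hc _ ltr01.
apply: filterS => x hx.
have -> : h x = h p + (- (h p - h x)) by rewrite opprB addrC subrK.
by rewrite (le_trans (ler_normD _ _))// lerD2l normrN ltW.
Qed.

Lemma Good_diffp h : Good h -> differentiable h p.
Proof. by case=> /nbhs_singleton. Qed.

Lemma Good_cont h : Good h -> {for p, continuous h}.
Proof. by move=> /Good_diffp /differentiable_continuous. Qed.

Lemma Good_Bnd h : Good h -> Bnd h.
Proof. by move=> /Good_cont /cont_Bnd. Qed.

Lemma Bnd_mul f g : Bnd f -> Bnd g -> Bnd (fun x => f x * g x).
Proof.
move=> [M1 H1] [M2 H2]; exists (`|M1| * `|M2|).
near=> x.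
have h1 : `|f x| <= M1 by near: x.
have h2 : `|g x| <= M2 by near: x.
rewrite normrM ler_pM //; apply: le_trans (ler_norm _); done.
Unshelve. all: by end_near.
Qed.

Lemma Bnd_add f g : Bnd f -> Bnd g -> Bnd (fun x => f x + g x).
Proof.
move=> [M1 H1] [M2 H2]; exists (M1 + M2).
near=> x.
have h1 : `|f x| <= M1 by near: x.
have h2 : `|g x| <= M2 by near: x.
by rewrite (le_trans (ler_normD _ _)) // lerD.
Unshelve. all: by end_near.
Qed.

Lemma Bnd_cst c : Bnd (fun _ => c).
Proof. by exists `|c|; near=> x. Unshelve. all: by end_near. Qed.


Lemma Bnd_ext f g : (\forall x \near p, f x = g x) -> Bnd g -> Bnd f.
Proof.
move=> fg [M H]; exists M; near=> x.
have -> : f x = g x by near: x.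
by near: x.
Unshelve. all: by end_near.
Qed.

Lemma pd_add (h g : pt -> R) i x : differentiable h x -> differentiable g x ->
  pd (fun y => h y + g y) i x = pd h i x + pd g i x.
Proof.
move=> dh dg; rewrite /pd.
by rewrite (@deriveD _ _ _ h g) //; apply: diff_derivable.
Qed.

Lemma pd_mul (h g : pt -> R) i x : differentiable h x -> differentiable g x ->
  pd (fun y => h y * g y) i x = h x * pd g i x + g x * pd h i x.
Proof.
move=> dh dg; rewrite /pd.
by rewrite (@deriveM _ _ h g) //; apply: diff_derivable.
Qed.

Lemma pd_cst c i x : pd (fun _ => c) i x = 0.
Proof. exact: derive_cst. Qed.

Lemma Good_add h g : Good h -> Good g -> Good (fun x => h x + g x).
Proof.
move=> [dh bh] [dg bg]; split.
  by near=> x; apply: differentiableD; near: x.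
move=> i; apply: (@Bnd_ext _ (fun x => pd h i x + pd g i x)).
  by near=> x; apply: pd_add; near: x.
exact: Bnd_add.
Unshelve. all: by end_near.
Qed.

Lemma Good_mul h g : Good h -> Good g -> Good (fun x => h x * g x).
Proof.
move=> Gh Gg; have Bh := Good_Bnd Gh; have Bg := Good_Bnd Gg.
case: Gh => dh bh; case: Gg => dg bg; split.
  by near=> x; apply: differentiableM; near: x.
move=> i; apply: (@Bnd_ext _ (fun x => h x * pd g i x + g x * pd h i x)).
  by near=> x; apply: pd_mul; near: x.
by apply: Bnd_add; apply: Bnd_mul.
Unshelve. all: by end_near.
Qed.

Lemma Good_cst c : Good (fun _ => c).
Proof.
split; first by near=> x; exact: differentiable_cst.
move=> i; apply: (@Bnd_ext _ (fun _ => 0)); last exact: Bnd_cst.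
by near=> x; apply: pd_cst.
Unshelve. all: by end_near.
Qed.


Lemma nz_near (h : pt -> R) : {for p, continuous h} -> h p != 0 ->
  \forall x \near p, `|h p| / 2 <= `|h x|.
Proof.
move=> hc hp.
have e0 : 0 < `|h p| / 2 by rewrite divr_gt0 ?normr_gt0.
have := @cvgr_dist_lt _ _ _ _ (nbhs_filter p) _ _ hc _ e0.
apply: filterS => x hx.
have : `|h p| <= `|h p - h x| + `|h x|.
  by rewrite -{1}[h p](subrK (h x)) ler_normD.
move=> H; rewrite -(lerD2l (`|h p| / 2)) -splitr.
by rewrite (le_trans H) // lerD2r ltW.
Qed.

Lemma OF_self F : OF F F.
Proof. by exists 1; near=> x; rewrite mul1r. Unshelve. all: by end_near. Qed.

Lemma OF_0 F : OF F (fun _ => 0).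
Proof. by exists 0; near=> x; rewrite normr0 mul0r. Unshelve. all: by end_near. Qed.

Lemma OF_ext F X Y : (\forall x \near p, X x = Y x) -> OF F Y -> OF F X.
Proof.
move=> XY [K H]; exists K; near=> x.
have -> : X x = Y x by near: x.
by near: x.
Unshelve. all: by end_near.
Qed.

Lemma OF_add F X Y : OF F X -> OF F Y -> OF F (fun x => X x + Y x).
Proof.
move=> [K1 H1] [K2 H2]; exists (K1 + K2); near=> x.
have h1 : `|X x| <= K1 * `|F x| by near: x.
have h2 : `|Y x| <= K2 * `|F x| by near: x.
by rewrite mulrDl (le_trans (ler_normD _ _)) // lerD.
Unshelve. all: by end_near.
Qed.

Lemma OF_mulB F b X : Bnd b -> OF F X -> OF F (fun x => b x * X x).
Proof.
move=> [M Hb] [K H]; exists (`|M| * `|K|); near=> x.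
have h1 : `|b x| <= M by near: x.
have h2 : `|X x| <= K * `|F x| by near: x.
rewrite normrM -mulrA ler_pM //.
  by rewrite (le_trans h1) // ler_norm.
rewrite (le_trans h2) // ler_wpM2r // ler_norm.
Unshelve. all: by end_near.
Qed.

Lemma OF_opp F X : OF F X -> OF F (fun x => - X x).
Proof.
move=> H; apply: (@OF_ext _ _ (fun x => (fun _ => -1) x * X x)).
  by near=> x; rewrite mulN1r.
by apply: OF_mulB => //; exact: Bnd_cst.
Unshelve. all: by end_near.
Qed.

Lemma OF_cancel F (b : pt -> R) X : {for p, continuous b} -> b p != 0 ->
  OF F (fun x => b x * X x) -> OF F X.
Proof.
move=> bc bp [K H]; exists (K / (`|b p| / 2)).
have bp2 : 0 < `|b p| / 2 by rewrite divr_gt0 ?normr_gt0.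
have := nz_near bc bp; move=> Hb.
near=> x.
have h1 : `|b p| / 2 <= `|b x| by near: x.
have h2 : `|b x * X x| <= K * `|F x| by near: x.
rewrite mulrAC ler_pdivlMr // (le_trans _ h2) // normrM mulrC.
by rewrite ler_wpM2r.
Unshelve. all: by end_near.
Qed.


Lemma open_near (V : set pt) : open V -> V p -> \forall x \near p, V x.
Proof. by move=> oV Vp; apply: open_nbhs_nbhs; split. Qed.

Lemma Good_ent m (V : set pt) (f : pt -> 'rV[R]_m) j :
  open V -> V p -> smooth_on V f -> Good (ent f j).
Proof.
move=> oV Vp sf; have NV := open_near oV Vp; split.
  by near=> x; apply: ent_diff; apply: (smooth_diff sf); near: x.
move=> i; apply: (@Bnd_ext _ (ent (fun x => derive f x (ee i)) j)).
  near=> x; rewrite /pd ent_derive //; apply: (smooth_diff sf); near: x.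
  exact: NV.
apply: cont_Bnd; apply: differentiable_continuous; apply: ent_diff.
exact: (smooth_diff (smooth_der _ sf)).
Unshelve. all: by end_near.
Qed.


Lemma Good_opp h : Good h -> Good (fun x => - h x).
Proof.
move=> Gh; have -> : (fun x => - h x) = (fun x => (fun _ => -1) x * h x).
  by apply: funext => x; rewrite mulN1r.
by apply: Good_mul => //; exact: Good_cst.
Qed.

Lemma Good_sub h g : Good h -> Good g -> Good (fun x => h x - g x).
Proof. by move=> Gh Gg; apply: Good_add => //; exact: Good_opp. Qed.

Lemma Good_dot3 (a b : 'I_3 -> pt -> R) :
  (forall k, Good (a k)) -> (forall k, Good (b k)) ->
  Good (fun x => dot3 (a^~ x) (b^~ x)).
Proof.
by move=> Ga Gb; rewrite /dot3; repeat apply: Good_add; apply: Good_mul.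
Qed.

Lemma Good_crs (a b : 'I_3 -> pt -> R) :
  (forall k, Good (a k)) -> (forall k, Good (b k)) ->
  forall k, Good (fun x => crs (a^~ x) (b^~ x) k).
Proof.
move=> Ga Gb k; case: (ord3 k) => [->|[->|->]]; rewrite /crs /=;
  by apply: Good_sub; apply: Good_mul.
Qed.

Lemma OF_trans F G X : OF F G -> OF G X -> OF F X.
Proof.
move=> [K1 H1] [K2 H2]; exists (`|K2| * `|K1|); near=> x.
have h1 : `|G x| <= K1 * `|F x| by near: x.
have h2 : `|X x| <= K2 * `|G x| by near: x.
rewrite (le_trans h2) // (le_trans (ler_wpM2r _ (ler_norm K2))) //.
rewrite -mulrA ler_wpM2l //.
by rewrite (le_trans h1) // ler_wpM2r // ler_norm.
Unshelve. all: by end_near.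
Qed.

Lemma OF_dot3 F (a b : 'I_3 -> pt -> R) :
  (forall k, OF F (a k)) -> (forall k, Bnd (b k)) ->
  OF F (fun x => dot3 (a^~ x) (b^~ x)).
Proof.
move=> Ha Hb; rewrite /dot3.
apply: OF_add; [apply: OF_add|];
  (apply: (@OF_ext _ _ (fun x => b _ x * a _ x)); first by near=> x; rewrite mulrC);
  by apply: OF_mulB.
Unshelve. all: by end_near.
Qed.


Lemma Bnd_opp h : Bnd h -> Bnd (fun x => - h x).
Proof.
move=> [M H]; exists M; near=> x; rewrite normrN; near: x; exact: H.
Unshelve. all: by end_near.
Qed.

Lemma Bnd_sub f g : Bnd f -> Bnd g -> Bnd (fun x => f x - g x).
Proof. by move=> Bf Bg; apply: Bnd_add => //; exact: Bnd_opp. Qed.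

Lemma diff_dot3 (a b : 'I_3 -> pt -> R) x :
  (forall k, differentiable (a k) x) -> (forall k, differentiable (b k) x) ->
  differentiable (fun y => dot3 (a^~ y) (b^~ y)) x.
Proof.
by move=> Ha Hb; rewrite /dot3; repeat apply: differentiableD; apply: differentiableM.
Qed.

Lemma near_near (P : pt -> Prop) : (\forall x \near p, P x) ->
  \forall x \near p, \forall y \near x, P y.
Proof. by move=> /nbhs_interior. Qed.

End Near.
End S.


Section Core.
Context {R : realType} (p : 'rV[R]_3).
Notation pt := ('rV[R]_3).
Notation Good := (Good p).
Notation Bnd := (Bnd p).
Notation OF := (OF p).

Lemma near_all3 (Pr : 'I_3 -> pt -> Prop) :
  (forall k, \forall x \near p, Pr k x) -> \forall x \near p, forall k, Pr k x.
Proof.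
move=> H; near=> x => k; case: (ord3 k) => [->|[->|->]]; near: x; exact: H.
Unshelve. all: by end_near.
Qed.

Lemma pd_near (f g : pt -> R) i x : (\forall y \near x, f y = g y) ->
  pd f i x = pd g i x.
Proof. by move=> H; rewrite /pd; apply: near_eq_derive. Qed.

Lemma OF_mulF F b : Bnd b -> OF F (fun x => F x * b x).
Proof.
move=> Bb; apply: (@OF_ext _ p F _ (fun x => b x * F x)).
  by near=> x; rewrite mulrC.
by apply: OF_mulB => //; exact: OF_self.
Unshelve. all: by end_near.
Qed.

Lemma Good_pdB h i : Good h -> Bnd (pd h i).
Proof. by case=> _ /(_ i). Qed.

Lemma lag3 (a b : 'I_3 -> R) :
  dot3 a a * dot3 b b = dot3 (crs a b) (crs a b) + dot3 a b ^+ 2.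
Proof. by rewrite /dot3 /crs /=; ring. Qed.

Lemma dot3_ge0 (a : 'I_3 -> R) : 0 <= dot3 a a.
Proof. by rewrite /dot3 -!expr2 !addr_ge0 // sqr_ge0. Qed.

Lemma alg3 (A0 B0 F0 G0 fi fj Ai Aj gi gj Bi Bj wi wj : R) :
  A0 * fi + F0 * Ai + (B0 * gi + G0 * Bi) = 0 ->
  A0 * fj + F0 * Aj + (B0 * gj + G0 * Bj) = 0 ->
  A0 * (fi * wj - fj * wi) =
  - (F0 * (Ai * wj - Aj * wi)) - (G0 * (Bi * wj - Bj * wi)) - B0 * (gi * wj - gj * wi).
Proof.
move=> H1 H2.
have e1 : A0 * fi = - (F0 * Ai + (B0 * gi + G0 * Bi)).
  by apply/eqP; rewrite -addr_eq0 addrA H1.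
have e2 : A0 * fj = - (F0 * Aj + (B0 * gj + G0 * Bj)).
  by apply/eqP; rewrite -addr_eq0 addrA H2.
have -> : A0 * (fi * wj - fj * wi) = (A0 * fi) * wj - (A0 * fj) * wi by ring.
by rewrite e1 e2; ring.
Qed.

Lemma bound3 (a0 a1 a2 b0 b1 b2 K f : R) :
  `|b0| <= K * f -> `|b1| <= K * f -> `|b2| <= K * f ->
  `|a0 * b0 + a1 * b1 + a2 * b2| <= K * (`|a0| + `|a1| + `|a2|) * f.
Proof.
move=> h0 h1 h2.
apply: (le_trans (ler_normD _ _)).
apply: (@le_trans _ _ (`|a0 * b0| + `|a1 * b1| + `|a2 * b2|)).
  by rewrite lerD2r ler_normD.
rewrite !normrM.
have e0 : `|a0| * `|b0| <= `|a0| * (K * f) by rewrite ler_wpM2l.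
have e1 : `|a1| * `|b1| <= `|a1| * (K * f) by rewrite ler_wpM2l.
have e2 : `|a2| * `|b2| <= `|a2| * (K * f) by rewrite ler_wpM2l.
have -> : K * (`|a0| + `|a1| + `|a2|) * f =
  `|a0| * (K * f) + `|a1| * (K * f) + `|a2| * (K * f) by ring.
by rewrite !lerD.
Qed.

Lemma nz_near2 (h : pt -> R) : {for p, continuous h} -> h p != 0 ->
  \forall x \near p, h x != 0.
Proof.
move=> hc hp; apply: filterS (nz_near hc hp) => x hx.
rewrite -normr_gt0 (lt_le_trans _ hx) // divr_gt0 ?normr_gt0 //.
Qed.

Lemma core (u w r1 r2 s t : 'I_3 -> pt -> R) :
  (forall j, Good (u j)) -> (forall j, Good (w j)) ->
  (forall j, Good (r1 j)) -> (forall j, Good (r2 j)) ->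
  (\forall x \near p, forall j, differentiable (s j) x /\ differentiable (t j) x) ->
  (\forall x \near p, forall i j, pd (s j) i x = pd (s i) j x /\ pd (t j) i x = pd (t i) j x) ->
  (\forall x \near p, forall v, dot3 (u^~x) v = 0 -> dot3 (s^~x) v = 0) ->
  (\forall x \near p, forall v, dot3 (w^~x) v = 0 -> dot3 (t^~x) v = 0) ->
  (\forall x \near p, dot3 (s^~x) (crs (r1^~x) (r2^~x)) + dot3 (t^~x) (crs (r1^~x) (r2^~x)) = 0) ->
  dot3 (u^~p) (crs (r1^~p) (r2^~p)) != 0 ->
  dot3 (w^~p) (crs (r1^~p) (r2^~p)) != 0 ->
  dot3 (crs (u^~p) (w^~p)) (crs (u^~p) (w^~p)) != 0 ->
  dot3 (s^~p) (u^~p) = 0 ->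
  \forall x \near p, forall j, s j x = 0 /\ t j x = 0.
Proof.
move=> Gu Gw Gr1 Gr2 Dst Cst Ps Pt L3 alp bep qp F0.
pose P : 'I_3 -> pt -> R := fun k x => crs (r1^~x) (r2^~x) k.
pose F := fun x => dot3 (s^~x) (u^~x).
pose G := fun x => dot3 (t^~x) (w^~x).
pose r1f := fun x => dot3 (u^~x) (u^~x).
pose r2f := fun x => dot3 (w^~x) (w^~x).
pose al := fun x => dot3 (u^~x) (P^~x).
pose be := fun x => dot3 (w^~x) (P^~x).
pose Qv : 'I_3 -> pt -> R := fun k x => crs (u^~x) (w^~x) k.
pose q := fun x => dot3 (Qv^~x) (Qv^~x).
pose A := fun x => r2f x * al x.
pose B := fun x => r1f x * be x.
have GP : forall k, Good (P k) by exact: Good_crs.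
have GQ : forall k, Good (Qv k) by exact: Good_crs.
have Gr1f : Good r1f by exact: Good_dot3.
have Gr2f : Good r2f by exact: Good_dot3.
have Gal : Good al by exact: Good_dot3.
have Gbe : Good be by exact: Good_dot3.
have Gq : Good q by exact: Good_dot3.
have GA : Good A by exact: Good_mul.
have GB : Good B by exact: Good_mul.
have I1 : \forall x \near p, forall j, r1f x * s j x = F x * u j x.
  by near=> x; apply: par_lemma; near: x.
have I2 : \forall x \near p, forall j, r2f x * t j x = G x * w j x.
  by near=> x; apply: par_lemma; near: x.
have I3 : \forall x \near p, A x * F x + B x * G x = 0.
  near=> x.
  have h1 : forall j, r1f x * s j x = F x * u j x by near: x.
  have h2 : forall j, r2f x * t j x = G x * w j x by near: x.
  have h3 : dot3 (s^~x) (P^~x) + dot3 (t^~x) (P^~x) = 0 by near: x.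
  have e1 : dot3 (fun k => r1f x * s k x) (P^~x) = F x * al x.
    by rewrite /dot3 /= !h1 /F /al /dot3; ring.
  have e2 : dot3 (fun k => r2f x * t k x) (P^~x) = G x * be x.
    by rewrite /dot3 /= !h2 /G /be /dot3; ring.
  have -> : A x * F x + B x * G x =
    r2f x * dot3 (fun k => r1f x * s k x) (P^~x) +
    r1f x * dot3 (fun k => r2f x * t k x) (P^~x).
    by rewrite e1 e2 /A /B; ring.
  have -> : r2f x * dot3 (fun k => r1f x * s k x) (P^~x) +
    r1f x * dot3 (fun k => r2f x * t k x) (P^~x) =
    r1f x * r2f x * (dot3 (s^~x) (P^~x) + dot3 (t^~x) (P^~x)).
    by rewrite /dot3; ring.
  by rewrite h3 mulr0.
have Du : \forall x \near p, forall k, differentiable (u k) x.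
  by apply: near_all3 => k; case: (Gu k).
have Dw : \forall x \near p, forall k, differentiable (w k) x.
  by apply: near_all3 => k; case: (Gw k).
have DF : \forall x \near p, differentiable F x.
  near=> x.
  have hs : forall k, differentiable (s k) x /\ differentiable (t k) x by near: x.
  have hu : forall k, differentiable (u k) x by near: x.
  by apply: diff_dot3 => k; [exact: (hs k).1 | exact: hu].
have DG : \forall x \near p, differentiable G x.
  near=> x.
  have hs : forall k, differentiable (s k) x /\ differentiable (t k) x by near: x.
  have hw : forall k, differentiable (w k) x by near: x.
  by apply: diff_dot3 => k; [exact: (hs k).2 | exact: hw].
have r1fp : r1f p != 0.
  apply/eqP => h; move: qp; have := lag3 (u^~p) (w^~p).
  rewrite -/(r1f p) h mul0r => /eqP; rewrite eq_sym paddr_eq0 ?dot3_ge0 ?sqr_ge0 //.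
  by case/andP=> ->.
have r2fp : r2f p != 0.
  apply/eqP => h; move: qp; have := lag3 (u^~p) (w^~p).
  rewrite -/(r2f p) h mulr0 => /eqP; rewrite eq_sym paddr_eq0 ?dot3_ge0 ?sqr_ge0 //.
  by case/andP=> ->.
have Ap : A p != 0 by rewrite mulf_neq0.
have Bp : B p != 0 by rewrite mulf_neq0.
have Fp : F p = 0 by exact: F0.
have eQ : forall k x, Qv k x = crs (u^~x) (w^~x) k by [].
have eq : forall x, q x = dot3 (Qv^~x) (Qv^~x) by [].
have qp' : q p != 0 by exact: qp.
clearbody A B q Qv be al r2f r1f G F P.
have D1 : \forall x \near p, forall i j,
    pd F i x * u j x - pd F j x * u i x =
    pd r1f i x * s j x - pd r1f j x * s i x - F x * (pd (u j) i x - pd (u i) j x).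
  near=> x.
  have I1x : \forall y \near x, forall j, r1f y * s j y = F y * u j y.
    by near: x; apply: near_near.
  have hs : forall k, differentiable (s k) x /\ differentiable (t k) x by near: x.
  have hu : forall k, differentiable (u k) x by near: x.
  have hF : differentiable F x by near: x.
  have hr : differentiable r1f x by near: x; case: Gr1f.
  have hC : forall i j, pd (s j) i x = pd (s i) j x /\ pd (t j) i x = pd (t i) j x.
    by near: x.
  have e : forall i k, r1f x * pd (s k) i x + s k x * pd r1f i x =
                       F x * pd (u k) i x + u k x * pd F i x.
    move=> i k.
    have := @pd_near (fun y => r1f y * s k y) (fun y => F y * u k y) i x.
    rewrite pd_mul //; last exact: (hs k).1.
    rewrite pd_mul //; apply.
    by apply: filterS I1x => y; apply.
  by move=> i j; apply: (alg1 (e i j) (e j i) (hC i j).1).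
have D2 : \forall x \near p, forall i j,
    pd G i x * w j x - pd G j x * w i x =
    pd r2f i x * t j x - pd r2f j x * t i x - G x * (pd (w j) i x - pd (w i) j x).
  near=> x.
  have I2x : \forall y \near x, forall j, r2f y * t j y = G y * w j y.
    by near: x; apply: near_near.
  have hs : forall k, differentiable (s k) x /\ differentiable (t k) x by near: x.
  have hw : forall k, differentiable (w k) x by near: x.
  have hG : differentiable G x by near: x.
  have hr : differentiable r2f x by near: x; case: Gr2f.
  have hC : forall i j, pd (s j) i x = pd (s i) j x /\ pd (t j) i x = pd (t i) j x.
    by near: x.
  have e : forall i k, r2f x * pd (t k) i x + t k x * pd r2f i x =
                       G x * pd (w k) i x + w k x * pd G i x.
    move=> i k.
    have := @pd_near (fun y => r2f y * t k y) (fun y => G y * w k y) i x.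
    rewrite pd_mul //; last exact: (hs k).2.
    rewrite pd_mul //; apply.
    by apply: filterS I2x => y; apply.
  by move=> i j; apply: (alg1 (e i j) (e j i) (hC i j).2).
have D3 : \forall x \near p, forall i,
    A x * pd F i x + F x * pd A i x + (B x * pd G i x + G x * pd B i x) = 0.
  near=> x.
  have I3x : \forall y \near x, A y * F y + B y * G y = 0.
    by near: x; apply: near_near.
  have hF : differentiable F x by near: x.
  have hG : differentiable G x by near: x.
  have hA : differentiable A x by near: x; case: GA.
  have hB : differentiable B x by near: x; case: GB.
  move=> i.
  have := @pd_near (fun y => A y * F y + B y * G y) (fun _ => 0) i x I3x.
  rewrite pd_cst (@pd_add _ (fun y => A y * F y) (fun y => B y * G y) i x (differentiableM hA hF) (differentiableM hB hG)).
  by rewrite (pd_mul i hA hF) (pd_mul i hB hG).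
have BF : Bnd F.
  by apply: cont_Bnd; apply: differentiable_continuous; exact: (nbhs_singleton DF).
have BG : Bnd G.
  by apply: cont_Bnd; apply: differentiable_continuous; exact: (nbhs_singleton DG).
have OFs : forall j, OF F (s j).
  move=> j; apply: (@OF_cancel _ p _ r1f); [exact: Good_cont | exact: r1fp |].
  apply: (@OF_ext _ p _ _ (fun x => u j x * F x)).
    near=> x; rewrite (mulrC (u j x)); near: x; exact: filterS I1 => y /(_ j).
  exact: (OF_mulB (Good_Bnd (Gu j)) (OF_self p F)).
have OFG : OF F G.
  apply: (@OF_cancel _ p _ B); [exact: Good_cont | exact: Bp |].
  apply: (@OF_ext _ p _ _ (fun x => (fun y => - A y) x * F x)).
    near=> x; rewrite mulNr; apply/eqP; rewrite -addr_eq0 addrC; apply/eqP.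
    by near: x.
  exact: (OF_mulB (Bnd_opp (Good_Bnd GA)) (OF_self p F)).
have OFt : forall j, OF F (t j).
  move=> j; apply: (OF_trans OFG).
  apply: (@OF_cancel _ p _ r2f); [exact: Good_cont | exact: r2fp |].
  apply: (@OF_ext _ p _ _ (fun x => w j x * G x)).
    near=> x; rewrite (mulrC (w j x)); near: x; exact: filterS I2 => y /(_ j).
  exact: (OF_mulB (Good_Bnd (Gw j)) (OF_self p G)).
have E1 : forall i j, OF F (fun x => pd F i x * u j x - pd F j x * u i x).
  move=> i j; apply: (@OF_ext _ p _ _ (fun x => pd r1f i x * s j x - pd r1f j x * s i x
      - F x * (pd (u j) i x - pd (u i) j x))).
    exact: filterS D1 => y /(_ i j).
  exact: (OF_add (OF_add (OF_mulB (Good_pdB i Gr1f) (OFs j))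
     (OF_opp (OF_mulB (Good_pdB j Gr1f) (OFs i))))
     (OF_opp (OF_mulF F (Bnd_sub (Good_pdB i (Gu j)) (Good_pdB j (Gu i)))))).
have E2 : forall i j, OF F (fun x => pd G i x * w j x - pd G j x * w i x).
  move=> i j; apply: (@OF_ext _ p _ _ (fun x => pd r2f i x * t j x - pd r2f j x * t i x
      - G x * (pd (w j) i x - pd (w i) j x))).
    exact: filterS D2 => y /(_ i j).
  exact: (OF_add (OF_add (OF_mulB (Good_pdB i Gr2f) (OFt j))
     (OF_opp (OF_mulB (Good_pdB j Gr2f) (OFt i))))
     (OF_opp (OF_trans OFG (OF_mulF G (Bnd_sub (Good_pdB i (Gw j)) (Good_pdB j (Gw i))))))).
have Bm : forall i j, OF F (fun x => pd F i x * w j x - pd F j x * w i x).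
  move=> i j; apply: (@OF_cancel _ p _ A); [exact: Good_cont | exact: Ap |].
  apply: (@OF_ext _ p _ _ (fun x =>
     - (F x * (pd A i x * w j x - pd A j x * w i x))
     - (G x * (pd B i x * w j x - pd B j x * w i x))
     - B x * (pd G i x * w j x - pd G j x * w i x))).
    near=> x.
    have hD : forall i, A x * pd F i x + F x * pd A i x +
      (B x * pd G i x + G x * pd B i x) = 0 by near: x.
    have h1 := hD i; have h2 := hD j.
    have e1 : A x * pd F i x = - (F x * pd A i x + (B x * pd G i x + G x * pd B i x)).
      by apply/eqP; rewrite -addr_eq0 addrA h1.
    have e2 : A x * pd F j x = - (F x * pd A j x + (B x * pd G j x + G x * pd B j x)).
      by apply/eqP; rewrite -addr_eq0 addrA h2.
    transitivity (w j x * (A x * pd F i x) - w i x * (A x * pd F j x)); first by ring.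
    by rewrite e1 e2; ring.
  exact: (OF_add (OF_add
    (OF_opp (OF_mulF F (Bnd_sub (Bnd_mul (Good_pdB i GA) (Good_Bnd (Gw j)))
                                (Bnd_mul (Good_pdB j GA) (Good_Bnd (Gw i))))))
    (OF_opp (OF_trans OFG (OF_mulF G (Bnd_sub (Bnd_mul (Good_pdB i GB) (Good_Bnd (Gw j)))
                                (Bnd_mul (Good_pdB j GB) (Good_Bnd (Gw i))))))))
    (OF_opp (OF_mulB (Good_Bnd GB) (E2 i j)))).
pose BB : 'I_3 -> pt -> R := fun k x => crs (fun l => pd F l x) (w^~x) k.
pose EE : 'I_3 -> pt -> R := fun k x => crs (fun l => pd F l x) (u^~x) k.
have OBB : forall k, OF F (BB k).
  move=> k; case: (ord3 k) => [->|[->|->]]; rewrite /BB /crs /=; exact: Bm.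
have OEE : forall k, OF F (EE k).
  move=> k; case: (ord3 k) => [->|[->|->]]; rewrite /EE /crs /=; exact: E1.
have BQ : forall k, Bnd (Qv k) by move=> k; exact: (Good_Bnd (GQ k)).
have Bw : forall k, Bnd (w k) by move=> k; exact: (Good_Bnd (Gw k)).
have Grad : forall k, OF F (pd F k).
  move=> k; apply: (@OF_cancel _ p _ q); [exact: Good_cont | exact: qp' |].
  apply: (@OF_ext _ p _ _ (fun x =>
     u k x * dot3 (BB^~x) (Qv^~x) + (- (w k x * dot3 (EE^~x) (Qv^~x)))
     + Qv k x * dot3 (EE^~x) (w^~x))).
    near=> x.
    have eQx : (Qv^~x) = crs (u^~x) (w^~x) by apply: funext => l; exact: eQ.
    rewrite eq eQx eQ (solve_lemma (u^~x) (w^~x) (fun l => pd F l x) k).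
    by rewrite /BB /EE; ring.
  apply: OF_add; [apply: OF_add; [|apply: OF_opp]|]; apply: OF_mulB;
    try exact: (Good_Bnd (GQ _)); try exact: (Good_Bnd (Gu _));
    try exact: (Good_Bnd (Gw _)); exact: OF_dot3.
have KB : exists K, \forall x \near p,
    differentiable F x /\ forall k, `|pd F k x| <= K * `|F x|.
  have [K0 H0] := Grad 0; have [K1 H1] := Grad 1; have [K2 H2] := Grad 2.
  exists (`|K0| + `|K1| + `|K2|); near=> x; split; first by near: x.
  have h0 : `|pd F 0 x| <= K0 * `|F x| by near: x.
  have h1 : `|pd F 1 x| <= K1 * `|F x| by near: x.
  have h2 : `|pd F 2 x| <= K2 * `|F x| by near: x.
  have n0 := normr_ge0 K0; have n1 := normr_ge0 K1; have n2 := normr_ge0 K2.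
  have m0 := ler_norm K0; have m1 := ler_norm K1; have m2 := ler_norm K2.
  have nf := normr_ge0 (F x).
  move=> k; case: (ord3 k) => [->|[->|->]].
  - by apply: (le_trans h0); rewrite ler_wpM2r //; lra.
  - by apply: (le_trans h1); rewrite ler_wpM2r //; lra.
  - by apply: (le_trans h2); rewrite ler_wpM2r //; lra.
case: KB => K HK.
have FZ : \forall x \near p, F x = 0.
  move/nbhs_ballP: HK => [r r0 Hr].
  apply/nbhs_ballP; exists r => // y pyr.
  set d := y - p.
  have seg : forall tau, 0 <= tau <= 1 -> ball p r (p + tau *: d).
    move=> tau /andP[t0 t1]; move: pyr; rewrite -ball_normE /= => pyr.
    rewrite opprD addrA subrr add0r normrN normrZ ger0_norm //.
    apply: le_lt_trans pyr; rewrite /d -normrN opprB.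
    by rewrite ler_piMl.
  pose phi := fun tau : R => F (p + tau *: d).
  have : phi 1 = 0.
    apply: (@gronwall _ phi (K * (`|d 0 0| + `|d 0 1| + `|d 0 2|))).
    - by move=> tau htau; exact: (seg_derive (Hr _ (seg tau htau)).1).1.
    - move=> tau /andP[t0 t1]; have htau : 0 <= tau <= 1 by rewrite !ltW.
      have [dF bF] := Hr _ (seg tau htau).
      rewrite (seg_derive dF).2 derive_lin1 // sum3.
      exact: bound3.
    - by rewrite /phi scale0r addr0.
  by rewrite /phi scale1r /d addrC subrK.
have NZ1 := nz_near2 (Good_cont Gr1f) r1fp.
have NZ2 := nz_near2 (Good_cont Gr2f) r2fp.
have NZB := nz_near2 (Good_cont GB) Bp.
near=> x.
have h1' : forall j, r1f x * s j x = F x * u j x by near: x.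
have h2' : forall j, r2f x * t j x = G x * w j x by near: x.
have h3 : A x * F x + B x * G x = 0 by near: x.
have fx : F x = 0 by near: x.
have n1 : r1f x != 0 by near: x.
have n2 : r2f x != 0 by near: x.
have nB : B x != 0 by near: x.
have gx : G x = 0.
  by move: h3; rewrite fx mulr0 add0r => /eqP; rewrite mulf_eq0 (negbTE nB) => /eqP.
move=> j; have h1 := h1' j; have h2 := h2' j.
split.
  by move: h1; rewrite fx mul0r => /eqP; rewrite mulf_eq0 (negbTE n1) => /eqP.
by move: h2; rewrite gx mul0r => /eqP; rewrite mulf_eq0 (negbTE n2) => /eqP.
Unshelve. all: by end_near.
Qed.
End Core.


Section Main.
Context {R : realType}.
Notation pt := ('rV[R]_3).

Lemma eval3 (a v : pt) :
  eval_form a v = dot3 (fun k => a 0 k) (fun k => v 0 k).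
Proof. by rewrite /eval_form sum3. Qed.

Lemma ker_entry m (g : pt -> 'rV[R]_m) x (v : pt) j :
  differentiable g x ->
  derive g x v 0 j = dot3 (fun k => ent (fun y => derive g y (ee k)) j x) (fun k => v 0 k).
Proof.
move=> dg; rewrite derive_lin // summxE sum3 !mxE /dot3 /ent.
by rewrite !(mulrC (v 0 _)).
Qed.

Lemma rV1_eq0 (M : 'rV[R]_1) : (M = 0) <-> M 0 0 = 0.
Proof.
split=> [->|h]; first by rewrite mxE.
by apply/rowP => i; rewrite ord1 h mxE.
Qed.

Lemma rV2_eq0 (M : 'rV[R]_2) : (M = 0) <-> M 0 0 = 0 /\ M 0 1 = 0.
Proof.
split=> [->|[h0 h1]]; first by rewrite !mxE.
apply/rowP => i; rewrite mxE; case: i => [[|[|k]] Hk].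
- by rewrite -h0; congr (M _ _); apply: val_inj.
- by rewrite -h1; congr (M _ _); apply: val_inj.
- by [].
Qed.

Lemma pd_comb (s1 t1 : form R) (a b : R) i j x :
  differentiable s1 x -> differentiable t1 x ->
  pd (ent (a *: s1 + b *: t1) j) i x = a * dcoef s1 i x 0 j + b * dcoef t1 i x 0 j.
Proof.
move=> ds dt.
have dst : differentiable (a *: s1 + b *: t1) x.
  by apply: differentiableD; apply: differentiableZ.
rewrite /pd ent_derive // deriveD; last 2 first.
- by apply: diff_derivable; apply: differentiableZ.
- by apply: diff_derivable; apply: differentiableZ.
rewrite !deriveZ; try exact: diff_derivable.
by rewrite !mxE.
Qed.


Lemma binet (r1 r2 v v' : 'I_3 -> R) :
  dot3 r1 v * dot3 r2 v' - dot3 r1 v' * dot3 r2 v = dot3 (crs r1 r2) (crs v v').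
Proof. by rewrite /dot3 /crs /=; ring. Qed.

Lemma crs_sym_sq (a b : 'I_3 -> R) :
  dot3 (crs b a) (crs b a) = dot3 (crs a b) (crs a b).
Proof. by rewrite /dot3 /crs /=; ring. Qed.

Lemma dot3C (a b : 'I_3 -> R) : dot3 a b = dot3 b a.
Proof. by rewrite /dot3; ring. Qed.


Lemma eval_lin (x y v : pt) (a b : R) :
  eval_form (a *: x + b *: y) v = a * eval_form x v + b * eval_form y v.
Proof. by rewrite !eval3 /dot3 !mxE; ring. Qed.

Lemma eval_opp (x v : pt) : eval_form (- x) v = - eval_form x v.
Proof. by rewrite !eval3 /dot3 !mxE; ring. Qed.

Lemma ent_dot (S : pt -> pt) x (v : 'I_3 -> R) :
  dot3 ((fun j => ent S j)^~ x) v = eval_form (S x) (\row_k v k).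
Proof. by rewrite eval3 /dot3 /ent !mxE. Qed.

Lemma row_dot (a v : 'I_3 -> R) : dot3 a (fun k => (\row_k v k : pt) 0 k) = dot3 a v.
Proof. by rewrite /dot3 !mxE. Qed.

Lemma ker1 (g : pt -> 'rV[R]_1) x (v : pt) :
  differentiable g x ->
  (derive g x v = 0) <-> dot3 (fun k => ent (fun y => derive g y (ee k)) 0 x) (fun k => v 0 k) = 0.
Proof. by move=> dg; rewrite rV1_eq0 ker_entry. Qed.

Lemma ker2 (g : pt -> 'rV[R]_2) x (v : pt) :
  differentiable g x ->
  (derive g x v = 0) <->
  dot3 (fun k => ent (fun y => derive g y (ee k)) 0 x) (fun k => v 0 k) = 0 /\
  dot3 (fun k => ent (fun y => derive g y (ee k)) 1 x) (fun k => v 0 k) = 0.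
Proof. by move=> dg; rewrite rV2_eq0 !ker_entry. Qed.

End Main.


Unset Implicit Arguments. Set Strict Implicit.

Theorem lemma1 (R : realType) (U : set 'rV[R]_3) (D1 D2 D3 : 'rV[R]_3 -> set 'rV[R]_3) :
  open U ->
  foliation 1 U D1 -> foliation 1 U D2 -> foliation 2 U D3 ->
  web_nondegenerate U D1 D2 D3 ->
  forall p, U p -> rank_le1_at D1 D2 D3 p.
Proof.
move=> oU F1 F2 F3 ND p Up.
have [V1 [g1 [oV1 V1p V1U sg1 hg1]]] := F1 p Up.
have [V2 [g2 [oV2 V2p V2U sg2 hg2]]] := F2 p Up.
have [V3 [g3 [oV3 V3p V3U sg3 hg3]]] := F3 p Up.
pose u : 'I_3 -> 'rV[R]_3 -> R := fun j => ent (fun y => derive g1 y (ee j)) 0.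
pose w : 'I_3 -> 'rV[R]_3 -> R := fun j => ent (fun y => derive g2 y (ee j)) 0.
pose r1 : 'I_3 -> 'rV[R]_3 -> R := fun j => ent (fun y => derive g3 y (ee j)) 0.
pose r2 : 'I_3 -> 'rV[R]_3 -> R := fun j => ent (fun y => derive g3 y (ee j)) 1.
have Gu : forall j, Good p (u j) by move=> j; exact: Good_ent oV1 V1p (smooth_der _ sg1).
have Gw : forall j, Good p (w j) by move=> j; exact: Good_ent oV2 V2p (smooth_der _ sg2).
have Gr1 : forall j, Good p (r1 j) by move=> j; exact: Good_ent oV3 V3p (smooth_der _ sg3).
have Gr2 : forall j, Good p (r2 j) by move=> j; exact: Good_ent oV3 V3p (smooth_der _ sg3).
have D1c : forall x, V1 x -> forall v, D1 x v <-> dot3 (u^~x) (fun k => v 0 k) = 0.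
  move=> x Vx v; have [_ ->] := hg1 x Vx; rewrite /=.
  exact: (ker1 _ (smooth_diff sg1 Vx)).
have D2c : forall x, V2 x -> forall v, D2 x v <-> dot3 (w^~x) (fun k => v 0 k) = 0.
  move=> x Vx v; have [_ ->] := hg2 x Vx; rewrite /=.
  exact: (ker1 _ (smooth_diff sg2 Vx)).
have D3c : forall x, V3 x -> forall v, D3 x v <->
    dot3 (r1^~x) (fun k => v 0 k) = 0 /\ dot3 (r2^~x) (fun k => v 0 k) = 0.
  move=> x Vx v; have [_ ->] := hg3 x Vx; rewrite /=.
  exact: (ker2 _ (smooth_diff sg3 Vx)).
have [nd12 nd31 nd32] := ND p Up.
have [v0 hv0] : exists v0 : 'I_3 -> R, dot3 (u^~p) v0 = 1.
  have [v hv] := (hg1 p V1p).1 (const_mx 1).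
  exists (fun k => v 0 k); move: hv => /(congr1 (fun M : 'rV[R]_1 => M 0 0)).
  by rewrite ker_entry ?mxE //; exact: (smooth_diff sg1 V1p).
have [v1 hv1] : exists v1 : 'I_3 -> R, dot3 (w^~p) v1 = 1.
  have [v hv] := (hg2 p V2p).1 (const_mx 1).
  exists (fun k => v 0 k); move: hv => /(congr1 (fun M : 'rV[R]_1 => M 0 0)).
  by rewrite ker_entry ?mxE //; exact: (smooth_diff sg2 V2p).
pose P := crs (r1^~p) (r2^~p).
have Pp : dot3 P P != 0.
  have dg3 := smooth_diff sg3 V3p.
  have [va hva] := (hg3 p V3p).1 (delta_mx 0 0).
  have [vb hvb] := (hg3 p V3p).1 (delta_mx 0 1).
  have ea0 : dot3 (r1^~p) (fun k => va 0 k) = 1.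
    by move: hva => /(congr1 (fun M : 'rV[R]_2 => M 0 0)); rewrite ker_entry // mxE.
  have ea1 : dot3 (r2^~p) (fun k => va 0 k) = 0.
    by move: hva => /(congr1 (fun M : 'rV[R]_2 => M 0 1)); rewrite ker_entry // mxE.
  have eb0 : dot3 (r1^~p) (fun k => vb 0 k) = 0.
    by move: hvb => /(congr1 (fun M : 'rV[R]_2 => M 0 0)); rewrite ker_entry // mxE.
  have eb1 : dot3 (r2^~p) (fun k => vb 0 k) = 1.
    by move: hvb => /(congr1 (fun M : 'rV[R]_2 => M 0 1)); rewrite ker_entry // mxE.
  have := binet (r1^~p) (r2^~p) (fun k => va 0 k) (fun k => vb 0 k).
  rewrite ea0 ea1 eb0 eb1 mul1r mulr0 subr0 -/P => h.
  apply/negP => /eqP /sos3 [h0 h1 h2]; move: h.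
  by rewrite /dot3 h0 h1 h2 !mul0r !addr0 => /eqP; rewrite oner_eq0.
have alp : dot3 (u^~p) P != 0.
  apply/negP => /eqP a0; apply: nd31 => v /(D3c _ V3p) [h1 h2].
  apply/(D1c _ V1p).
  have := line_lemma (u^~p) h1 h2; rewrite -/P a0 mulr0 => /eqP.
  by rewrite mulf_eq0 (negbTE Pp) => /eqP.
have bep : dot3 (w^~p) P != 0.
  apply/negP => /eqP a0; apply: nd32 => v /(D3c _ V3p) [h1 h2].
  apply/(D2c _ V2p).
  have := line_lemma (w^~p) h1 h2; rewrite -/P a0 mulr0 => /eqP.
  by rewrite mulf_eq0 (negbTE Pp) => /eqP.
have qp : dot3 (crs (u^~p) (w^~p)) (crs (u^~p) (w^~p)) != 0.
  apply/negP => /eqP q0; apply: nd12; apply/seteqP; split => v.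
    move=> /(D1c _ V1p) h; apply/(D2c _ V2p).
    exact: (plane_lemma hv0 q0 h).
  move=> /(D2c _ V2p) h; apply/(D1c _ V1p).
  by apply: (plane_lemma hv1 _ h); rewrite crs_sym_sq.
move=> W W' s1 s2 s3 t1 t2 t3 oW Wp [cs1 cs2 cs3 [vs1 vs2 vs3] ss]
  oW' W'p [ct1 ct2 ct3 [vt1 vt2 vt3] st].
pose Fs := dot3 (fun k => s1 p 0 k) (u^~p).
pose Ft := dot3 (fun k => t1 p 0 k) (u^~p).
suff main : forall a b : R, (a, b) <> (0, 0) -> a * Fs + b * Ft = 0 ->
  exists (a b : R) (W'' : set 'rV[R]_3),
      [/\ (a, b) <> (0, 0), open W'', W'' p, W'' `<=` W `&` W' &
        forall x, W'' x ->
          [/\ a *: s1 x + b *: t1 x = 0, a *: s2 x + b *: t2 x = 0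
            & a *: s3 x + b *: t3 x = 0]].
  have [/andP[/eqP h1 /eqP h2] | hn] := boolP ((Fs == 0) && (Ft == 0)).
    apply: (main 1 0); last by rewrite h1 h2 !mulr0 addr0.
    by case=> /eqP; rewrite oner_eq0.
  apply: (main Ft (- Fs)); last by ring.
  case=> h1 /eqP; rewrite oppr_eq0 => /eqP h2; move: hn; by rewrite h1 h2 eqxx.
move=> a b ab0 eab.
pose S1 := a *: s1 + b *: t1.
pose S2 := a *: s2 + b *: t2.
have NW := open_near oW Wp.
have NW' := open_near oW' W'p.
have NV1 := open_near oV1 V1p.
have NV2 := open_near oV2 V2p.
have NV3 := open_near oV3 V3p.
have Dst : \forall x \near p, forall j,
    differentiable ((fun j => ent S1 j) j) x /\ differentiable ((fun j => ent S2 j) j) x.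
  near=> x.
  have Wx : W x by near: x.
  have W'x : W' x by near: x.
  move=> j; split; apply: ent_diff; apply: differentiableD; apply: differentiableZ.
  - exact: (smooth_diff cs1.1 Wx).
  - exact: (smooth_diff ct1.1 W'x).
  - exact: (smooth_diff cs2.1 Wx).
  - exact: (smooth_diff ct2.1 W'x).
have Cst : \forall x \near p, forall i j,
    pd ((fun j => ent S1 j) j) i x = pd ((fun j => ent S1 j) i) j x /\
    pd ((fun j => ent S2 j) j) i x = pd ((fun j => ent S2 j) i) j x.
  near=> x.
  have Wx : W x by near: x.
  have W'x : W' x by near: x.
  move=> i j /=.
  rewrite (pd_comb a b i j (smooth_diff cs1.1 Wx) (smooth_diff ct1.1 W'x)).
  rewrite (pd_comb a b j i (smooth_diff cs1.1 Wx) (smooth_diff ct1.1 W'x)).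
  rewrite (pd_comb a b i j (smooth_diff cs2.1 Wx) (smooth_diff ct2.1 W'x)).
  rewrite (pd_comb a b j i (smooth_diff cs2.1 Wx) (smooth_diff ct2.1 W'x)).
  by rewrite (cs1.2 x Wx i j) (ct1.2 x W'x i j) (cs2.2 x Wx i j) (ct2.2 x W'x i j).
have ES1 : forall x, S1 x = a *: s1 x + b *: t1 x by [].
have ES2 : forall x, S2 x = a *: s2 x + b *: t2 x by [].
have Ps : \forall x \near p, forall v, dot3 (u^~x) v = 0 ->
    dot3 ((fun j => ent S1 j)^~x) v = 0.
  near=> x.
  have Wx : W x by near: x.
  have W'x : W' x by near: x.
  have Vx : V1 x by near: x.
  move=> v hv.
  have D : D1 x (\row_k v k) by apply/(D1c x Vx); rewrite row_dot.
  by rewrite ent_dot ES1 eval_lin (vs1 x Wx _ D) (vt1 x W'x _ D) !mulr0 addr0.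
have Pt : \forall x \near p, forall v, dot3 (w^~x) v = 0 ->
    dot3 ((fun j => ent S2 j)^~x) v = 0.
  near=> x.
  have Wx : W x by near: x.
  have W'x : W' x by near: x.
  have Vx : V2 x by near: x.
  move=> v hv.
  have D : D2 x (\row_k v k) by apply/(D2c x Vx); rewrite row_dot.
  by rewrite ent_dot ES2 eval_lin (vs2 x Wx _ D) (vt2 x W'x _ D) !mulr0 addr0.
have L3 : \forall x \near p,
    dot3 ((fun j => ent S1 j)^~x) (crs (r1^~x) (r2^~x)) +
    dot3 ((fun j => ent S2 j)^~x) (crs (r1^~x) (r2^~x)) = 0.
  near=> x.
  have Wx : W x by near: x.
  have W'x : W' x by near: x.
  have Vx : V3 x by near: x.
  set l : 'rV[R]_3 := \row_k crs (r1^~x) (r2^~x) k.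
  have Dl : D3 x l.
    apply/(D3c x Vx); rewrite /l !row_dot.
    by split; [exact: cross_orth1 | exact: cross_orth2].
  rewrite !ent_dot -/l ES1 ES2 !eval_lin.
  have e3 : s3 x = - (s1 x + s2 x) by rewrite -[RHS]addr0 -(ss x Wx) addKr.
  have f3 : t3 x = - (t1 x + t2 x) by rewrite -[RHS]addr0 -(st x W'x) addKr.
  have h1 : eval_form (s1 x) l + eval_form (s2 x) l = 0.
    have := vs3 x Wx l Dl; rewrite e3 eval_opp.
    have -> : s1 x + s2 x = 1 *: s1 x + 1 *: s2 x by rewrite !scale1r.
    by rewrite eval_lin !mul1r => /eqP; rewrite oppr_eq0 => /eqP.
  have h2 : eval_form (t1 x) l + eval_form (t2 x) l = 0.
    have := vt3 x W'x l Dl; rewrite f3 eval_opp.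
    have -> : t1 x + t2 x = 1 *: t1 x + 1 *: t2 x by rewrite !scale1r.
    by rewrite eval_lin !mul1r => /eqP; rewrite oppr_eq0 => /eqP.
  transitivity (a * (eval_form (s1 x) l + eval_form (s2 x) l) +
                b * (eval_form (t1 x) l + eval_form (t2 x) l)); first by ring.
  by rewrite h1 h2 !mulr0 addr0.
have F0 : dot3 ((fun j => ent S1 j)^~p) (u^~p) = 0.
  rewrite -eab /Fs /Ft /dot3 /ent ES1 !mxE; ring.
have CZ := @core R p u w r1 r2 (fun j => ent S1 j) (fun j => ent S2 j) Gu Gw Gr1 Gr2
  Dst Cst Ps Pt L3 alp bep qp F0.
have Hall : \forall x \near p, W x /\ W' x /\
    forall j, ent S1 j x = 0 /\ ent S2 j x = 0.
  near=> x; split; first by near: x.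
  split; first by near: x.
  by near: x.
move/nbhs_ballP: Hall => [r r0 Hr].
exists a, b, (ball p r); split => //.
- exact: ball_open.
- exact: ballxx.
- by move=> x /Hr [Wx [W'x _]].
move=> x /Hr [Wx [W'x hz]].
have z1 : a *: s1 x + b *: t1 x = 0.
  apply/rowP => j; have := (hz j).1; rewrite /ent ES1 => ->; by rewrite mxE.
have z2 : a *: s2 x + b *: t2 x = 0.
  apply/rowP => j; have := (hz j).2; rewrite /ent ES2 => ->; by rewrite mxE.
split => //.
have e3 : s3 x = - (s1 x + s2 x) by rewrite -[RHS]addr0 -(ss x Wx) addKr.
have f3 : t3 x = - (t1 x + t2 x) by rewrite -[RHS]addr0 -(st x W'x) addKr.
rewrite e3 f3 !scalerN -opprD.
have -> : a *: (s1 x + s2 x) + b *: (t1 x + t2 x) =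
  (a *: s1 x + b *: t1 x) + (a *: s2 x + b *: t2 x).
  by rewrite !scalerDr addrACA.
by rewrite z1 z2 addr0 oppr0.
Unshelve. all: by end_near.
Qed.
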